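(* Let $n,d\in\mathbb{N}_*$, let $p$ be a prime number with $p>d^n$, and let $K$ be a commutative domain of characteristic $p$. Then $\mathrm{CJC}(n,p,d,K)$ holds if and only if $\mathrm{NJC}(n,p,d,K)$ holds.
   Context: $\mathbb{N}_*=\mathbb{N}\setminus\{0\}$; for a domain $R$, $R_*^{-1}R$ is its fraction field, with $R_*=R\setminus\{0\}$; $K^*$ is the unit group of $K$; $p\mathbb{N}=\{pk:k\in\mathbb{N}\}$. For $n,d\in\mathbb{N}_*$, $p$ equal to $0$ or a prime, and $K$ a commutative domain of characteristic $p$, the statement $\mathrm{CJC}(n,p,d,K)$ is: for every pair of polynomial $K$-algebras $A$, $B$ in $n$ indeterminates and every injective $K$-algebra homomorphism $\phi:A\to B$ such that $\deg\phi(X)\le d$ for each indeterminate $X$ of $A$, letting $J(\phi)$ be the Jacobian matrix of $(\phi(X_1),\dots,\phi(X_n))$ (where $X_1,\dots,X_n$ are the indeterminates of $A$) with respect to the indeterminates of $B$, the following are equivalent: (1) $\phi$ is an isomorphism; (2) $\det J(\phi)\in K^*$ and $[B_*^{-1}B:\phi(A_* )^{-1}\phi(A)]\notin p\mathbb{N}$. The statement $\mathrm{NJC}(n,p,d,K)$ is the same statement with the condition $[B_*^{-1}B:\phi(A_* )^{-1}\phi(A)]\notin p\mathbb{N}$ deleted from (2), i.e. $\phi$ is an isomorphism if and only if $\det J(\phi)\in K^*$. *)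

(* Defs.v *)
From HB Require Import structures.
From mathcomp Require Import all_boot all_order all_algebra.
From mathcomp Require Import fraction mpoly.
Set Implicit Arguments. Unset Strict Implicit. Unset Printing Implicit Defensive.
Import GRing.Theory.
Local Open Scope ring_scope.
Notation tofrac := (@FracField.tofrac _).

(* The polynomial K-algebra in n indeterminates is modelled by {mpoly K[n]}
   (indeterminates 'X_i, i : 'I_n).  Both A and B are taken to be this algebra
   (any polynomial K-algebra in n indeterminates is isomorphic to it, via an
   isomorphism sending indeterminates to indeterminates). *)

Definition jacobian (K : idomainType) (n : nat)
  (phi : {lrmorphism {mpoly K[n]} -> {mpoly K[n]}}) : 'M[{mpoly K[n]}]_n :=
  \matrix_(i < n, j < n) (phi 'X_i)^`M(j).

Definition det_in_units (K : idomainType) (n : nat)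
  (phi : {lrmorphism {mpoly K[n]} -> {mpoly K[n]}}) : Prop :=
  exists c : K, c \is a GRing.unit /\ \det (jacobian phi) = @mpolyC n K c.

Definition in_frac_image (K : idomainType) (n : nat)
  (phi : {lrmorphism {mpoly K[n]} -> {mpoly K[n]}})
  (x : {fraction {mpoly K[n]}}) : Prop :=
  exists a b : {mpoly K[n]}, b != 0 /\ x = tofrac (phi a) / tofrac (phi b).

Definition frac_degree_is (K : idomainType) (n : nat)
  (phi : {lrmorphism {mpoly K[n]} -> {mpoly K[n]}}) (m : nat) : Prop :=
  exists s : m.-tuple {fraction {mpoly K[n]}},
    (forall c : 'I_m -> {fraction {mpoly K[n]}},
        (forall i, in_frac_image phi (c i)) ->
        \sum_(i < m) c i * tnth s i = 0 -> forall i, c i = 0) /\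
    (forall x : {fraction {mpoly K[n]}},
        exists c : 'I_m -> {fraction {mpoly K[n]}},
          (forall i, in_frac_image phi (c i)) /\
          x = \sum_(i < m) c i * tnth s i).

(* [B_star^{-1}B : phi(A_star)^{-1}phi(A)] \notin pN  (an infinite degree is not
   in pN). *)
Definition frac_degree_notin_pN (K : idomainType) (n : nat)
  (phi : {lrmorphism {mpoly K[n]} -> {mpoly K[n]}}) (p : nat) : Prop :=
  forall m : nat, frac_degree_is phi m -> ~ (p %| m)%N.

(* deg phi(X) <= d for every indeterminate X of A (msize = total degree + 1,
   and msize 0 = 0). *)
Definition deg_bounded (K : idomainType) (n : nat)
  (phi : {lrmorphism {mpoly K[n]} -> {mpoly K[n]}}) (d : nat) : Prop :=
  forall i : 'I_n, (msize (phi 'X_i) <= d.+1)%N.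

Definition CJC (n p d : nat) (K : idomainType) : Prop :=
  forall phi : {lrmorphism {mpoly K[n]} -> {mpoly K[n]}},
    injective phi -> deg_bounded phi d ->
    (bijective phi <-> det_in_units phi /\ frac_degree_notin_pN phi p).

Definition NJC (n p d : nat) (K : idomainType) : Prop :=
  forall phi : {lrmorphism {mpoly K[n]} -> {mpoly K[n]}},
    injective phi -> deg_bounded phi d ->
    (bijective phi <-> det_in_units phi).

(* Main.v *)
Require Import Defs.
From HB Require Import structures.
From mathcomp Require Import all_boot all_order all_algebra.
From mathcomp Require Import fraction mpoly generic_quotient.
From mathcomp Require Import zify.
Set Implicit Arguments. Unset Strict Implicit. Unset Printing Implicit Defensive.
Import GRing.Theory.

Lemma expn_mono a b e : a <= b -> a ^ e <= b ^ e.
Proof. by move=> h; elim: e => // e IH; rewrite !expnS leq_mul. Qed.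

Lemma ffact_lb n t : (t.+1) ^ n <= (n + t) ^_ n.
Proof.
elim: n => [|n IH]; first by rewrite expn0 ffactn0.
rewrite addSn ffactSS expnS leq_mul //; lia.
Qed.

Lemma ffact_ub n x : x ^_ n <= x ^ n.
Proof.
elim: n x => [|n IH] x; first by rewrite ffactn0 expn0.
rewrite ffactnS expnS leq_mul //; apply: leq_trans (IH _) _.
exact: expn_mono (leq_pred x).
Qed.

Lemma pow_bound n x c : (x + c) ^ n.+1 <= x ^ n.+1 + n.+1 * c * (x + c) ^ n.
Proof.
elim: n => [|n IH]; first by rewrite !expn1 expn0 mul1n muln1.
have h1 : x ^ n.+1 <= (x + c) ^ n.+1 by apply: expn_mono; rewrite leq_addr.
have e1 : (x + c) ^ n.+2 = (x + c) * (x + c) ^ n.+1 by rewrite expnS.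
have e2 : x ^ n.+2 = x * x ^ n.+1 by rewrite expnS.
have e3 : (x + c) ^ n.+1 = (x + c) * (x + c) ^ n by rewrite expnS.
rewrite e1 e2.
have h2 := leq_mul (leqnn (x + c)) IH.
apply: leq_trans h2 _.
move: h1; rewrite e3.
set A := x ^ n.+1; set C := (x + c) ^ n.
nia.
Qed.

Lemma asym (n d e m : nat) : 0 < n ->
  (forall t, m * 'C(n + t, n) <= 'C(n + (d * t + e), n)) -> m <= d ^ n.
Proof.
case: n => // n _ H.
rewrite leqNgt; apply/negP => hm.
set c := n.+1 + e.
set t := n.+1 * c * (d + c) ^ n.
have := H t.
rewrite -(leq_pmul2r (fact_gt0 n.+1)) -mulnA !bin_ffact => h.
have h2 : m * (t.+1) ^ n.+1 <= (d * t.+1 + c) ^ n.+1.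
  apply: leq_trans (leq_mul (leqnn m) (ffact_lb _ _)) _.
  apply: leq_trans h _; apply: leq_trans (ffact_ub _ _) _.
  rewrite leq_exp2r //; rewrite /c; lia.
have h3 := pow_bound n (d * t.+1) c.
have h4 : (d * t.+1) ^ n.+1 + t.+1 ^ n.+1 <= m * t.+1 ^ n.+1.
  rewrite expnMn; move: hm; set D := d ^ n.+1; set T := t.+1 ^ n.+1; nia.
have h5 : (d * t.+1 + c) ^ n <= (d + c) ^ n * t.+1 ^ n.
  by rewrite -expnMn; apply: expn_mono; rewrite mulnDl leq_add2l leq_pmulr.
have h6 : t.+1 ^ n.+1 <= n.+1 * c * ((d + c) ^ n * t.+1 ^ n).
  have := leq_trans h4 (leq_trans h2 h3).
  rewrite leq_add2l => h7; apply: leq_trans h7 _.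
  by rewrite leq_mul2l h5 orbT.
move: h6; rewrite mulnA -/t expnS leq_mul2r.
have -> : (t.+1 ^ n == 0) = false by rewrite expn_eq0.
by rewrite /= ltnn.
Qed.

Lemma card_bmnm (n k : nat) : #|{: 'X_{1..n < k.+1}}| = 'C(n + k, n).
Proof.
rewrite -card_partial_ord_partitions.
have le_i (a : 'X_{1..n < k.+1}) i : a i <= k.
  have := bmdeg a; rewrite ltnS; apply: leq_trans.
  by rewrite mdegE (bigD1 i) //= leq_addr.
pose f (a : 'X_{1..n < k.+1}) : n.-tuple 'I_k.+1 := [tuple inord (a i) | i < n].
have finj : injective f.
  move=> a b e; apply/val_inj/mnmP => i.
  have := congr1 (fun t => val (tnth t i)) e; rewrite /= !tnth_mktuple.
  by rewrite !inordK ?ltnS ?le_i.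
rewrite -(card_imset _ finj); apply: eq_card => t.
rewrite inE; apply/imsetP/idP.
  case=> a _ ->; rewrite big_tuple.
  rewrite (eq_bigr (fun i => a i)); last by move=> i _; rewrite tnth_mktuple inordK ?ltnS ?le_i.
  by rewrite -mdegE -ltnS bmdeg.
move=> ht.
have hm : mdeg [multinom [tuple val (tnth t i) | i < n]] < k.+1.
  rewrite ltnS mdegE (eq_bigr (fun i => val (tnth t i))); last by move=> i _; rewrite mnmE.
  by move: ht; rewrite big_tuple.
exists (BMultinom hm) => //.
apply: eq_from_tnth => i; rewrite tnth_mktuple /=; apply: val_inj => /=.
by rewrite mnmE inordK.
Qed.

Local Open Scope ring_scope.
Local Open Scope quotient_scope.

Lemma frac_repr (R : idomainType) (x : {fraction R}) :
  exists a b : R, b != 0 /\ x = tofrac a / tofrac b.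
Proof.
elim/quotW: x => r.
exists (\n_r), (\d_r); split; first exact: denom_ratioP.
have hd : tofrac (\d_r) != 0 by rewrite tofrac_eq0 denom_ratioP.
apply: (mulIf hd); rewrite mulfVK //.
have e1 : tofrac (\d_r) = \pi_{fraction R} (Ratio (\d_r) 1) by rewrite piE.
rewrite e1 -[LHS]/(FracField.mul _ _) -FracField.pi_mul piE.
apply/eqmodP; rewrite /= FracField.equivfE /FracField.mulf.
rewrite !numden_Ratio ?mulf_neq0 ?denom_ratioP ?oner_eq0 //.
by rewrite !mulr1 mulrC.
Qed.

Lemma clear_den (R : idomainType) (I : finType) (x : I -> {fraction R}) :
  exists h : R, h != 0 /\ exists g : I -> R, forall i, tofrac (g i) = tofrac h * x i.
Proof.
have /fin_all_exists [f hf] : forall i, exists ab : R * R,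
    ab.2 != 0 /\ x i = tofrac ab.1 / tofrac ab.2.
  by move=> i; have [a [b [hb e]]] := frac_repr (x i); exists (a, b).
exists (\prod_i (f i).2); split.
  by rewrite prodf_seq_neq0; apply/allP => i _; case: (hf i).
exists (fun i => (f i).1 * \prod_(j | j != i) (f j).2) => i.
have [hb ->] := hf i.
rewrite [in RHS](bigD1 i) //= !tofracM.
have hb' : tofrac (f i).2 != 0 by rewrite tofrac_eq0.
set a := tofrac _.1; set b := tofrac _.2; set P := tofrac (\prod_(_ | _) _).
by rewrite mulrA [RHS]mulrC mulrA mulKf // mulrC.
Qed.


Lemma inj_card (R : idomainType) (I J : finType) (A : I -> J -> R) :
  (forall v : I -> R, (forall j, \sum_i v i * A i j = 0) -> forall i, v i = 0) ->
  (#|I| <= #|J|)%N.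
Proof.
move=> hinj; rewrite leqNgt; apply/negP => hlt.
pose B : 'M[{fraction R}]_(#|I|, #|J|) :=
  \matrix_(r, c) tofrac (A (enum_val r) (enum_val c)).
have : kermx B != 0.
  rewrite kermx_eq0 /row_free; apply/negP => /eqP e.
  by move: (rank_leq_col B); rewrite e leqNgt hlt.
case/matrix0Pn => r [c hrc].
pose w := row r (kermx B).
have hw : w *m B = 0 by rewrite -row_mul mulmx_ker row0.
have [h [hh [g hg]]] := clear_den (fun x : I => w 0 (enum_rank x)).
have g0 : forall x, g x = 0.
  apply: hinj => j; apply/eqP; rewrite -tofrac_eq0; apply/eqP.
  rewrite rmorph_sum /=.
  transitivity (tofrac h * (w *m B) 0 (enum_rank j)); last by rewrite hw mxE mulr0.
  rewrite mxE mulr_sumr (reindex (@enum_rank I)) /=; last first.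
    by exists enum_val => x _; rewrite ?enum_rankK ?enum_valK.
  apply: eq_bigr => x _; rewrite tofracM hg !mxE !enum_rankK mulrA.
  done.
have wc : w 0 c = kermx B r c by rewrite mxE.
move: hrc; rewrite -wc -(enum_valK c).
have := hg (enum_val c); rewrite g0 tofrac0 => /esym /eqP.
by rewrite mulf_eq0 tofrac_eq0 (negbTE hh) /= => ->.
Qed.

Lemma msizeM_le' (K : idomainType) n (p q : {mpoly K[n]}) a b :
  (msize p <= a.+1)%N -> (msize q <= b.+1)%N -> (msize (p * q) <= (a + b).+1)%N.
Proof.
have [->|p0] := eqVneq p 0; first by rewrite mul0r msize0.
have [->|q0] := eqVneq q 0; first by rewrite mulr0 msize0.
rewrite msizeM //.
have : (0 < msize p)%N by rewrite lt0n msize_poly_eq0.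
have : (0 < msize q)%N by rewrite lt0n msize_poly_eq0.
lia.
Qed.

Lemma msizeX_le (K : idomainType) n (p : {mpoly K[n]}) a j :
  (msize p <= a.+1)%N -> (msize (p ^+ j) <= (a * j).+1)%N.
Proof.
move=> hp; elim: j => [|j IH]; first by rewrite expr0 msize1 muln0.
by rewrite exprS mulnS; apply: msizeM_le'.
Qed.

Lemma msize_prod_le (K : idomainType) n (I : finType) (F : I -> {mpoly K[n]}) (k : I -> nat) :
  (forall i, msize (F i) <= (k i).+1)%N -> (msize (\prod_i F i) <= (\sum_i k i).+1)%N.
Proof.
move=> hF; apply: (big_rec2 (fun a p => msize p <= a.+1)%N).
  by rewrite msize1.
by move=> i a p _ IH; apply: msizeM_le'.
Qed.

Lemma msize_phiX (K : idomainType) n d (phi : {lrmorphism {mpoly K[n]} -> {mpoly K[n]}})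
  (al : 'X_{1..n}) : deg_bounded phi d -> (msize (phi 'X_[al]) <= (d * mdeg al).+1)%N.
Proof.
move=> hd; rewrite mpolyXE_id rmorph_prod mdegE big_distrr /=.
apply: msize_prod_le => i; rewrite rmorphXn; apply: msizeX_le; exact: hd.
Qed.

Lemma msize_sum_le (K : idomainType) n (I : finType) (F : I -> {mpoly K[n]}) B :
  (forall i, msize (F i) <= B)%N -> (msize (\sum_i F i) <= B)%N.
Proof.
move=> hF; apply: (big_ind (fun p => msize p <= B)%N).
- by rewrite msize0.
- move=> p q hp hq; apply: leq_trans (msizeD_le _ _) _; by rewrite geq_max hp hq.
- by move=> i _; apply: hF.
Qed.

Lemma deg_bound (K : idomainType) n d (phi : {lrmorphism {mpoly K[n]} -> {mpoly K[n]}}) m :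
  (0 < n)%N -> injective phi -> deg_bounded phi d -> frac_degree_is phi m -> (m <= d ^ n)%N.
Proof.
move=> n0 inj hd [s [hind _]].
have [h [hh [g hg]]] := clear_den (fun i : 'I_m => tnth s i).
pose e := (\max_(i < m) msize (g i))%N.
have he : forall i, (msize (g i) <= e.+1)%N.
  move=> i; apply: leq_trans (leqnSn _); exact: (leq_bigmax i).
apply: (asym n0) => t.
rewrite -!card_bmnm -[X in (X * _)%N]card_ord -card_prod.
apply: (@inj_card K _ _ (fun (x : 'I_m * 'X_{1..n < t.+1}) (u : 'X_{1..n < (d * t + e).+1}) =>
   (phi 'X_[x.2] * g x.1)@_u)).
move=> v hv.
pose Q := \sum_x v x *: (phi 'X_[x.2] * g x.1).
have Q0 : Q = 0.
  apply/mpolyP => u; rewrite mcoeff0.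
  case: (ltnP (mdeg u) (d * t + e).+1) => hu.
    rewrite -(hv (BMultinom hu)) /Q linear_sum /=.
    by apply: eq_bigr => x _; rewrite mcoeffZ.
  apply/memN_msupp_eq0/msize_mdeg_ge; apply: leq_trans hu.
  apply: msize_sum_le => x; apply: leq_trans (msizeZ_le _ _) _.
  rewrite -addSn; apply: msizeM_le' => //.
  apply: leq_trans (msize_phiX _ hd) _.
  by rewrite ltnS leq_mul2l -ltnS bmdeg orbT.
pose a i := \sum_(al : 'X_{1..n < t.+1}) v (i, al) *: ('X_[al] : {mpoly K[n]}).
have QE : Q = \sum_i phi (a i) * g i.
  rewrite /Q (eq_bigr (fun x => v (x.1, x.2) *: (phi 'X_[x.2] * g x.1))); last by case.
  rewrite -(pair_bigA _ (fun i al => v (i, al) *: (phi 'X_[al] * g i))) /=; apply: eq_bigr => i _.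
  rewrite linear_sum /= mulr_suml; apply: eq_bigr => al _.
  by rewrite linearZ /= scalerAl.
have ha : forall i, phi (a i) = 0.
  move=> i; apply/eqP; rewrite -tofrac_eq0; apply/eqP; move: i.
  apply: hind.
    move=> i; exists (a i), 1; split; first exact: oner_neq0.
    by rewrite rmorph1 tofrac1 divr1.
  have : Defs.tofrac Q = 0 by rewrite Q0 tofrac0.
  rewrite QE rmorph_sum /=.
  under eq_bigr => i _ do rewrite tofracM hg mulrCA.
  rewrite -mulr_sumr => /eqP; rewrite mulf_eq0 tofrac_eq0 (negbTE hh) /=.
  by move/eqP.
have a0 : forall i, a i = 0 by move=> i; apply: inj; rewrite ha raddf0.
case=> i al; have := congr1 (mcoeff al) (a0 i).
rewrite mcoeff0 /a linear_sum /= (bigD1 al) //= mcoeffZ mcoeffX eqxx mulr1.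
rewrite big1 ?addr0 // => b hb; rewrite mcoeffZ mcoeffX.
by rewrite -bmeqP (negbTE hb) mulr0.
Qed.

Theorem mainTheorem3 (n d p : nat) (K : idomainType) :
  (0 < n)%N -> (0 < d)%N -> prime p -> (d ^ n < p)%N -> p \in [pchar K] ->
  (CJC n p d K <-> NJC n p d K).
Proof.
move=> n0 d0 pp hdp hch.
have key : forall phi : {lrmorphism {mpoly K[n]} -> {mpoly K[n]}},
    injective phi -> deg_bounded phi d -> frac_degree_notin_pN phi p.
  move=> phi inj hd m hm hpm.
  have mle := deg_bound n0 inj hd hm.
  have m0 : (0 < m)%N.
    rewrite lt0n; apply/eqP => em; subst m.
    case: hm => s [_ /(_ 1) [c [_]]]; rewrite big_ord0 => /eqP.
    by rewrite oner_eq0.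
  have := dvdn_leq m0 hpm; lia.
split => H phi inj hd; have := H phi inj hd; have := key phi inj hd; tauto.
Qed.
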